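(* Let $\Gamma\subseteq\mathbb R^n$ be an open convex set, $S\subseteq\Gamma$ a nonempty convex set, and $f:\Gamma\to\mathbb R$ a continuously differentiable function that is pseudoconvex on $\Gamma$. Let $\bar S=\arg\min\{f(x)\mid x\in S\}$ and $\bar x\in\bar S$. Define \[ \begin{aligned} T_1&:=\{x\in S\mid \nabla f(x)^T(\bar x-x)=0\},\\ T_2&:=\{x\in S\mid \nabla f(x)^T(\bar x-x)\ge0\},\\ T_3&:=\{x\in S\mid \nabla f(x)^T(\bar x-x)=\nabla f(\bar x)^T(x-\bar x)\},\\ T_4&:=\{x\in S\mid \nabla f(x)^T(\bar x-x)\ge\nabla f(\bar x)^T(x-\bar x)\},\\ T_5&:=\{x\in S\mid \nabla f(x)^T(\bar x-x)=\nabla f(\bar x)^T(x-\bar x)=0\}. \end{aligned} \] Then $\bar S=T_1=T_2=T_3=T_4=T_5$.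
   Context: A differentiable function $f$ on an open set $\Gamma$ is pseudoconvex on $\Gamma$ iff for all $x,y\in\Gamma$, $f(y)<f(x)$ implies $\nabla f(x)^T(y-x)<0$. *)

(* Defs.v *)
From Stdlib Require Import Reals.
From mathcomp Require Import ssreflect ssrfun ssrbool eqtype ssrnat seq fintype bigop.

Set Implicit Arguments.
Unset Strict Implicit.

Local Open Scope R_scope.

Definition vec (n : nat) : Type := 'I_n -> R.

Definition vadd {n} (x y : vec n) : vec n := fun i => x i + y i.
Definition vsub {n} (x y : vec n) : vec n := fun i => x i - y i.
Definition vscale {n} (t : R) (x : vec n) : vec n := fun i => t * x i.

Definition dot {n} (x y : vec n) : R := \big[Rplus/0]_(i < n) (x i * y i).
Definition vnorm {n} (x : vec n) : R := sqrt (dot x x).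

Definition is_open_vec {n} (G : vec n -> Prop) : Prop :=
  forall x, G x -> exists eps, 0 < eps /\
    forall y, vnorm (vsub y x) < eps -> G y.

Definition is_convex_vec {n} (C : vec n -> Prop) : Prop :=
  forall x y t, C x -> C y -> 0 <= t <= 1 ->
    C (vadd (vscale t x) (vscale (1 - t) y)).

Definition has_gradient {n} (f : vec n -> R) (x g : vec n) : Prop :=
  forall eps, 0 < eps -> exists delta, 0 < delta /\
    forall h, vnorm h < delta ->
      Rabs (f (vadd x h) - f x - dot g h) <= eps * vnorm h.

Definition C1_on {n} (G : vec n -> Prop) (f : vec n -> R) (grad : vec n -> vec n)
  : Prop :=
  (forall x, G x -> has_gradient f x (grad x)) /\
  (forall x, G x -> forall eps, 0 < eps -> exists delta, 0 < delta /\
     forall y, G y -> vnorm (vsub y x) < delta ->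
       vnorm (vsub (grad y) (grad x)) < eps).

Definition pseudoconvex_on {n} (G : vec n -> Prop) (f : vec n -> R)
  (grad : vec n -> vec n) : Prop :=
  forall x y, G x -> G y -> f y < f x -> dot (grad x) (vsub y x) < 0.

Definition argmin_on {n} (f : vec n -> R) (S : vec n -> Prop) (x : vec n) : Prop :=
  S x /\ forall y, S y -> f x <= f y.

(* Main.v *)
Require Import Defs.
From Stdlib Require Import Reals Lra Psatz FunctionalExtensionality.
From mathcomp Require bigop.
Local Open Scope R_scope.

Lemma dot_scale_r n (x y : vec n) t : dot x (vscale t y) = t * dot x y.
Proof.
  unfold dot, vscale.
  apply (bigop.big_ind2 (fun a b => b = t * a)).
  - ring.
  - intros; subst; ring.
  - intros; ring.
Qed.

Lemma dot_scale_l n (x y : vec n) t : dot (vscale t x) y = t * dot x y.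
Proof.
  unfold dot, vscale.
  apply (bigop.big_ind2 (fun a b => b = t * a)).
  - ring.
  - intros; subst; ring.
  - intros; ring.
Qed.

Lemma dot_self_ge0 n (x : vec n) : 0 <= dot x x.
Proof.
  unfold dot.
  apply (bigop.big_ind (fun a => 0 <= a)).
  - lra.
  - intros; lra.
  - intros; nra.
Qed.

Lemma vnorm_ge0 n (x : vec n) : 0 <= vnorm x.
Proof. unfold vnorm; apply sqrt_pos. Qed.

Lemma vnorm_scale n (x : vec n) t : vnorm (vscale t x) = Rabs t * vnorm x.
Proof.
  unfold vnorm. rewrite dot_scale_l, dot_scale_r.
  replace (t * (t * dot x x)) with (Rsqr t * dot x x) by (unfold Rsqr; ring).
  rewrite sqrt_mult; [|apply Rle_0_sqr|apply dot_self_ge0].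
  now rewrite sqrt_Rsqr_abs.
Qed.

Definition seg {n} (x y : vec n) t := vadd x (vscale t (vsub y x)).

Lemma seg_eq n (x y : vec n) t :
  vadd (vscale t y) (vscale (1 - t) x) = seg x y t.
Proof.
  apply functional_extensionality; intro i; unfold seg, vadd, vscale, vsub; ring.
Qed.

Lemma seg_sub_l n (x y : vec n) t : vsub x (seg x y t) = vscale (-t) (vsub y x).
Proof.
  apply functional_extensionality; intro i; unfold seg, vadd, vscale, vsub; ring.
Qed.

Lemma seg_sub_r n (x y : vec n) t :
  vsub y (seg x y t) = vscale (1 - t) (vsub y x).
Proof.
  apply functional_extensionality; intro i; unfold seg, vadd, vscale, vsub; ring.
Qed.

Lemma small_step n (f : vec n -> R) x g y :
  has_gradient f x g -> dot g (vsub y x) <> 0 ->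
  exists t, 0 < t <= 1/2 /\
    Rabs (f (seg x y t) - f x - t * dot g (vsub y x)) < t * Rabs (dot g (vsub y x)).
Proof.
  intros Hg Ha.
  set (a := dot g (vsub y x)) in *.
  set (N := vnorm (vsub y x)).
  assert (HN : 0 <= N) by apply vnorm_ge0.
  assert (Hpa : 0 < Rabs a) by (apply Rabs_pos_lt; auto).
  destruct (Hg (Rabs a / (2 * (N + 1)))) as [d [Hd Hh]].
  { apply Rdiv_lt_0_compat; lra. }
  set (t := Rmin (1/2) (d / (2 * (N + 1)))).
  assert (Ht1 : t <= 1/2) by apply Rmin_l.
  assert (Ht2 : t <= d / (2 * (N + 1))) by apply Rmin_r.
  assert (Ht0 : 0 < t).
  { unfold t; apply Rmin_glb_lt; [lra|apply Rdiv_lt_0_compat; lra]. }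
  exists t; split; [lra|].
  assert (Hn : vnorm (vscale t (vsub y x)) = t * N).
  { rewrite vnorm_scale; rewrite Rabs_right; [reflexivity|lra]. }
  assert (HtN : t * N < d).
  { apply Rle_lt_trans with (d / (2 * (N + 1)) * N).
    - apply Rmult_le_compat_r; lra.
    - unfold Rdiv. rewrite Rmult_assoc.
      assert (/ (2 * (N + 1)) * N < 1).
      { apply Rmult_lt_reg_l with (2 * (N + 1)); [lra|].
        rewrite <- Rmult_assoc, Rinv_r; [lra|lra]. }
      nra. }
  specialize (Hh (vscale t (vsub y x))).
  rewrite Hn in Hh. specialize (Hh HtN).
  fold (seg x y t) in Hh. rewrite dot_scale_r in Hh. fold a in Hh.
  eapply Rle_lt_trans; [exact Hh|].
  assert (Rabs a / (2 * (N + 1)) * N < Rabs a).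
  { unfold Rdiv. rewrite Rmult_assoc.
    assert (/ (2 * (N + 1)) * N < 1).
    { apply Rmult_lt_reg_l with (2 * (N + 1)); [lra|].
      rewrite <- Rmult_assoc, Rinv_r; [lra|lra]. }
    nra. }
  nra.
Qed.

Lemma const_dir n (f : vec n -> R) x g y :
  has_gradient f x g -> (forall t, 0 < t < 1 -> f (seg x y t) = f x) ->
  dot g (vsub y x) = 0.
Proof.
  intros Hg Hc.
  destruct (Req_dec (dot g (vsub y x)) 0) as [H|H]; auto.
  destruct (small_step _ _ _ _ _ Hg H) as [t [Ht Hs]].
  rewrite Hc in Hs; [|lra].
  replace (f x - f x - t * dot g (vsub y x)) with (- (t * dot g (vsub y x))) in Hs by ring.
  rewrite Rabs_Ropp, Rabs_mult, (Rabs_right t) in Hs; lra.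
Qed.

Lemma first_order n (f : vec n -> R) x g y :
  has_gradient f x g -> (forall t, 0 < t < 1 -> f x <= f (seg x y t)) ->
  0 <= dot g (vsub y x).
Proof.
  intros Hg Hc.
  destruct (Rle_or_lt 0 (dot g (vsub y x))) as [H|H]; auto.
  destruct (small_step _ _ _ _ _ Hg (Rlt_not_eq _ _ H)) as [t [Ht Hs]].
  specialize (Hc t ltac:(lra)).
  rewrite (Rabs_left (dot g (vsub y x))) in Hs; auto.
  apply Rabs_def2 in Hs. nra.
Qed.

Theorem corollary3 (n : nat) (G S : vec n -> Prop) (f : vec n -> R)
  (grad : vec n -> vec n) (xbar : vec n) :
  is_open_vec G -> is_convex_vec G ->
  (forall x, S x -> G x) -> (exists x, S x) -> is_convex_vec S ->
  C1_on G f grad -> pseudoconvex_on G f grad ->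
  argmin_on f S xbar ->
  forall x,
    (argmin_on f S x <-> (S x /\ dot (grad x) (vsub xbar x) = 0)) /\
    (argmin_on f S x <-> (S x /\ dot (grad x) (vsub xbar x) >= 0)) /\
    (argmin_on f S x <->
       (S x /\ dot (grad x) (vsub xbar x) = dot (grad xbar) (vsub x xbar))) /\
    (argmin_on f S x <->
       (S x /\ dot (grad x) (vsub xbar x) >= dot (grad xbar) (vsub x xbar))) /\
    (argmin_on f S x <->
       (S x /\ dot (grad x) (vsub xbar x) = dot (grad xbar) (vsub x xbar) /\
               dot (grad xbar) (vsub x xbar) = 0)).
Proof.
  intros _ _ HSG _ HcS [HD _] Hp Hxb x.
  assert (Hseg : forall u v t, S u -> S v -> 0 <= t <= 1 -> S (seg u v t)).
  { intros u v t Hu Hv Ht. rewrite <- seg_eq. apply HcS; auto; lra. }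
  assert (Hzero : forall u v, argmin_on f S u -> argmin_on f S v ->
             dot (grad u) (vsub v u) = 0).
  { intros u v [Hu Hmu] [Hv Hmv].
    apply const_dir with f; [apply HD, HSG; auto|].
    intros t Ht.
    assert (HS : S (seg u v t)) by (apply Hseg; auto; lra).
    destruct (Rle_lt_or_eq_dec _ _ (Hmu _ HS)) as [Hlt|Heq]; [|auto].
    exfalso.
    assert (Hfv : f v = f u) by (specialize (Hmu v Hv); specialize (Hmv u Hu); lra).
    assert (H1 := Hp _ _ (HSG _ HS) (HSG _ Hu) Hlt).
    assert (H2 : dot (grad (seg u v t)) (vsub v (seg u v t)) < 0)
      by (apply Hp; auto; lra).
    rewrite seg_sub_l, dot_scale_r in H1.
    rewrite seg_sub_r, dot_scale_r in H2.
    nra. }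
  assert (Hfo : forall y, S y -> 0 <= dot (grad xbar) (vsub y xbar)).
  { intros y Hy. destruct Hxb as [Hxs Hm].
    apply first_order with f; [apply HD, HSG; auto|].
    intros t Ht. apply Hm, Hseg; auto; lra. }
  (* pseudoconvexity gives sufficiency *)
  assert (Hsuf : S x -> dot (grad x) (vsub xbar x) >= 0 -> argmin_on f S x).
  { intros Hx Hd. split; auto. intros y Hy.
    destruct Hxb as [Hxs Hm].
    destruct (Rle_or_lt (f x) (f xbar)) as [H|H].
    - specialize (Hm y Hy); lra.
    - exfalso. assert (Hq := Hp _ _ (HSG _ Hx) (HSG _ Hxs) H). lra. }
  assert (Hnec : argmin_on f S x ->
     dot (grad x) (vsub xbar x) = 0 /\ dot (grad xbar) (vsub x xbar) = 0).
  { intros Hx. split; apply Hzero; auto. }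
  split; [|split; [|split; [|split]]]; split.
  - intros Hx. split; [apply Hx|apply Hnec, Hx].
  - intros [Hx Hd]. apply Hsuf; auto; lra.
  - intros Hx. split; [apply Hx|]. destruct (Hnec Hx); lra.
  - intros [Hx Hd]. apply Hsuf; auto.
  - intros Hx. split; [apply Hx|]. destruct (Hnec Hx); lra.
  - intros [Hx Hd]. apply Hsuf; auto. specialize (Hfo x Hx). lra.
  - intros Hx. split; [apply Hx|]. destruct (Hnec Hx); lra.
  - intros [Hx Hd]. apply Hsuf; auto. specialize (Hfo x Hx). lra.
  - intros Hx. split; [apply Hx|]. destruct (Hnec Hx); lra.
  - intros [Hx [Hd1 Hd2]]. apply Hsuf; auto. lra.
Qed.
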